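(* Let $G$ be a finitely generated group, $S$ a finite symmetric generating set, $\Gamma=\mathrm{Cay}(G,S)$, and $p\in(1,\infty)$. Let $f\in D^p(\Gamma)$. Suppose there exists a sequence $(\xi_n)$ of finitely supported functions $G\to\mathbb{K}$ such that: (1) $\sum_{\gamma\in G}\xi_n(\gamma)=1$ for all $n$; (2) for every $s\in S$, the functions $(\delta_s-\delta_e)*\xi_n*f$ converge point-wise to $0$ as $n\to\infty$; (3) there is $K>0$ such that for all $s\in S$ and all $n$, $\|(\delta_s-\delta_e)*\xi_n*f\|_{\ell^p(G)}<K$. Then the class $[f]$ of $f$ in $\overline{\ell^p H}^1(\Gamma)$ is $0$.
   Context: The Cayley graph $\Gamma=\mathrm{Cay}(G,S)$ has vertex set $G$ and edges $(\gamma,\gamma')$ with $s^{-1}\gamma=\gamma'$ for some $s\in S$. Functions take values in $\mathbb{K}=\mathbb{R}$ or $\mathbb{C}$. The gradient is $\nabla g(\gamma,\gamma')=g(\gamma')-g(\gamma)$; $D^p(\Gamma)=\{f:G\to\mathbb{K}:\nabla f\in\ell^p(E)\}$ with norm $\|f\|^p_{D^p}=\|\nabla f\|^p_{\ell^p(E)}+|f(e)|^p$, and $\overline{\ell^p H}^1(\Gamma)=D^p(\Gamma)/\overline{\ell^p(G)+\mathbb{K}}^{D^p}$ ($\mathbb{K}$ = constant functions). $\delta_\gamma$ is the Dirac mass at $\gamma$, and convolution is $(\xi*f)(\eta)=\sum_{\gamma\in G}\xi(\gamma)f(\gamma^{-1}\eta)$. *)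

(* Defs.v *)
From mathcomp Require Import all_boot all_algebra.
From mathcomp Require Import complex.
From mathcomp Require Import all_classical all_reals all_analysis.
Set Implicit Arguments. Unset Strict Implicit. Unset Printing Implicit Defensive.
Import GRing.Theory Num.Theory.
Import numFieldNormedType.Exports.
Local Open Scope classical_set_scope.
Local Open Scope ring_scope.

Record groupLaw (G : Type) := GroupLaw {
  gmul : G -> G -> G;
  ginv : G -> G;
  gone : G;
  gmulA : forall x y z, gmul x (gmul y z) = gmul (gmul x y) z;
  gmul1 : forall x, gmul gone x = x;
  gmulV : forall x, gmul (ginv x) x = gone }.

Section Group.
Variables (G : choiceType) (L : groupLaw G).

Definition symmetric_set (S : seq G) : Prop :=
  forall s, s \in S -> ginv L s \in S.

Definition generates (S : seq G) : Prop :=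
  forall g : G, exists w : seq G, all (fun s => s \in S) w /\ g = foldr (gmul L) (gone L) w.

Definition cayley_edges (S : seq G) : set (G * G) :=
  [set e | exists2 s, s \in S & gmul L (ginv L s) e.1 = e.2].
End Group.

Inductive scalar_kind := RealK | ComplexK.

Definition scal (R : realType) (k : scalar_kind) : numFieldType :=
  match k with RealK => (R : numFieldType) | ComplexK => (R[i] : numFieldType) end.

Definition sabs (R : realType) (k : scalar_kind) : scal R k -> R :=
  match k return scal R k -> R with
  | RealK => fun x : R => `|x|
  | ComplexK => fun z : R[i] => complex.Re `|z|
  end.

Section Spaces.
Variables (R : realType) (k : scalar_kind) (p : R).
Variables (G : choiceType) (L : groupLaw G) (S : seq G).
Local Notation K := (scal R k).

Definition lp_sum (g : G -> K) : \bar R :=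
  (\esum_(x in [set: G]) (sabs (g x) `^ p)%:E)%E.
Definition in_lp (g : G -> K) : Prop := (lp_sum g < +oo)%E.
Definition lp_norm (g : G -> K) : \bar R := (lp_sum g `^ p^-1)%E.

Definition grad_sum (f : G -> K) : \bar R :=
  (\esum_(e in cayley_edges L S) ((sabs (f e.2 - f e.1)) `^ p)%:E)%E.
Definition in_Dp (f : G -> K) : Prop := (grad_sum f < +oo)%E.
Definition Dp_normp (f : G -> K) : \bar R :=
  (grad_sum f + ((sabs (f (gone L))) `^ p)%:E)%E.

(* [f] = 0 in the reduced l^p-cohomology: f lies in the D^p-closure of l^p(G) + K *)
Definition reduced_class_zero (f : G -> K) : Prop :=
  forall eps : R, 0 < eps ->
    exists (g : G -> K) (c : K), in_lp g /\
      (Dp_normp (fun x => (f x - g x - c)%R) < eps%:E)%E.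

Definition fin_supp (xi : G -> K) : Prop := finite_set [set x | xi x != 0].
Definition total_mass (xi : G -> K) : K := \sum_(x \in [set: G]) xi x.
Definition delta (a : G) : G -> K := fun x => if x == a then 1 else 0.
(* (xi * f)(eta) = sum_gamma xi(gamma) f(gamma^-1 eta), for finitely supported xi *)
Definition gconv (xi f : G -> K) : G -> K :=
  fun eta => \sum_(g \in [set: G]) (xi g * f (gmul L (ginv L g) eta)).
End Spaces.

Arguments delta {R k G} a _.
Arguments gconv {R k G} L xi f _.

(* Main.v *)
Require Import Defs.
From mathcomp Require Import all_boot all_algebra.
From mathcomp Require Import complex.
From mathcomp Require Import all_classical all_reals all_analysis.
From mathcomp Require Import ring lra.
Import order.Order.TTheory GRing.Theory Num.Theory.
Import numFieldNormedType.Exports.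
Local Open Scope classical_set_scope.
Local Open Scope ring_scope.
Set Implicit Arguments. Unset Strict Implicit.

Section GroupFacts.
Variables (G : Type) (L : groupLaw G).
Local Notation m := (gmul L).
Local Notation i := (ginv L).
Local Notation e := (gone L).

Lemma gmulVr x : m x (i x) = e.
Proof.
rewrite -[m x (i x)](gmul1 L) -[in m e _](gmulV L (i x)).
by rewrite -gmulA (gmulA L (i x)) gmulV (gmul1 L) gmulV.
Qed.

Lemma gmulr1 x : m x e = x.
Proof. by rewrite -(gmulV L x) gmulA gmulVr gmul1. Qed.

Lemma gmulKl x y : m (i x) (m x y) = y.
Proof. by rewrite gmulA gmulV gmul1. Qed.

Lemma gmulKr x y : m x (m (i x) y) = y.
Proof. by rewrite gmulA gmulVr gmul1. Qed.

Lemma ginv_uniq a b : m a b = e -> a = i b.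
Proof. by move=> h; rewrite -[a]gmulr1 -(gmulVr b) gmulA h gmul1. Qed.

Lemma ginvM x y : i (m x y) = m (i y) (i x).
Proof.
symmetry; apply: ginv_uniq.
by rewrite -gmulA (gmulA L (i x)) gmulV (gmul1 L) gmulV.
Qed.

Lemma ginvK x : i (i x) = x.
Proof. by symmetry; apply: ginv_uniq; exact: gmulVr. Qed.

Lemma ginv1 : i e = e.
Proof. by rewrite -[i e]gmulr1 gmulV. Qed.

Lemma gmul_inj x : injective (m x).
Proof. by move=> a b h; rewrite -(gmulKl x a) h gmulKl. Qed.
End GroupFacts.

Section Sabs.
Variables (R : realType) (k : scalar_kind).
Local Notation K := (scal R k).
Implicit Types x y : K.

Lemma sabs_ge0 x : 0 <= sabs x.
Proof.
case: k x => /= x; first exact: normr_ge0.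
by case: x => a b /=; exact: sqrtr_ge0.
Qed.

Lemma sabsD x y : sabs (x + y) <= sabs x + sabs y.
Proof.
case: k x y => /= x y; first exact: ler_normD.
case: x y => a b [c d] /=. exact: (@le_normcD R (Complex a b) (Complex c d)).
Qed.

Lemma sabsM x y : sabs (x * y) = sabs x * sabs y.
Proof.
case: k x y => /= x y; first exact: normrM.
case: x y => a b [c d] /=. exact: (@Normc.normcM R (Complex a b) (Complex c d)).
Qed.

Lemma sabsN x : sabs (- x) = sabs x.
Proof.
case: k x => /= x; first exact: normrN.
case: x => a b /=. exact: (@normcN R (Complex a b)).
Qed.

Lemma sabsV x : sabs (x^-1) = (sabs x)^-1.
Proof.
case: k x => /= x; first exact: normfV.
case: x => a b /=. exact: (@Normc.normcV R (Complex a b)).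
Qed.

Lemma sabsMn x n : sabs (x *+ n) = sabs x *+ n.
Proof.
case: k x => /= x; first exact: normrMn.
case: x => a b /=. exact: (@normcMn R (Complex a b)).
Qed.

Lemma sabs1 : sabs (1 : K) = 1.
Proof. by case: k => /=; [exact: normr1 | exact: (@Normc.normc1 R)]. Qed.

Lemma sabs_nat n : sabs (n%:R : K) = n%:R.
Proof. by rewrite sabsMn sabs1. Qed.

Lemma sabs0 : sabs (0 : K) = 0.
Proof. by rewrite -(mulr0n 1) sabsMn. Qed.

Lemma sabsB x y : sabs (x - y) = sabs (y - x).
Proof. by rewrite -sabsN opprB. Qed.

Lemma sabs_sum (I : Type) (r : seq I) (F : I -> K) :
  sabs (\sum_(i <- r) F i) <= \sum_(i <- r) sabs (F i).
Proof.
elim: r => [|a r IH]; first by rewrite !big_nil sabs0.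
rewrite !big_cons; apply: (le_trans (sabsD _ _)); exact: lerD.
Qed.
End Sabs.
Section PowFacts.
Variables (R : realType) (p : R).
Hypothesis p1 : 1 < p.

Let p0 : 0 < p. Proof. exact: lt_trans p1. Qed.

Lemma pw0 : (0:R) `^ p = 0.
Proof. by rewrite powR0 // gt_eqF. Qed.

Lemma pw_le (a b : R) : 0 <= a -> a <= b -> a `^ p <= b `^ p.
Proof.
move=> a0 ab; apply: (ge0_ler_powR (ltW p0)); rewrite ?nnegrE //.
exact: le_trans ab.
Qed.

Lemma pw_max (u v : R) : 0 <= u -> 0 <= v -> (Num.max u v) `^ p <= u `^ p + v `^ p.
Proof.
move=> u0 v0; case: (leP u v) => _.
  by rewrite lerDr powR_ge0.
by rewrite lerDl powR_ge0.
Qed.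

Lemma pow_sum_le (I : Type) (s : seq I) (a : I -> R) : (forall i, 0 <= a i) ->
  (\sum_(i <- s) a i) `^ p <= (size s)%:R `^ p * \sum_(i <- s) a i `^ p.
Proof.
move=> a0.
have M0 : forall s : seq I, 0 <= \big[Num.max/0]_(i <- s) a i.
  elim=> [|x t IH]; first by rewrite big_nil.
  by rewrite big_cons le_max IH orbT.
have h1 : \sum_(i <- s) a i <= (size s)%:R * \big[Num.max/0]_(i <- s) a i.
  elim: s => [|x s IH]; first by rewrite !big_nil mulr0.
  rewrite !big_cons /= -addn1 natrD mulrDl mul1r addrC.
  apply: lerD; last by rewrite le_max lexx.
  apply: (le_trans IH); apply: ler_wpM2l => //; rewrite le_max lexx orbT //.
have h2 : (\big[Num.max/0]_(i <- s) a i) `^ p <= \sum_(i <- s) a i `^ p.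
  elim: s {h1} => [|x s IH]; first by rewrite !big_nil pw0.
  rewrite !big_cons; apply: (le_trans (pw_max (a0 x) (M0 s))).
  exact: lerD.
have s0 : 0 <= \sum_(i <- s) a i by apply: sumr_ge0.
apply: (le_trans (pw_le s0 h1)); rewrite powRM // ?ler0n //; apply: ler_wpM2l h2; exact: powR_ge0.
Qed.

Lemma pow_sum_excl (s : seq nat) (a : nat -> R) : uniq s -> (forall i, 0 <= a i) ->
  (forall i j, i \in s -> j \in s -> a i != 0 -> a j != 0 -> i = j) ->
  (\sum_(i <- s) a i) `^ p <= \sum_(i <- s) a i `^ p.
Proof.
elim: s => [|x s IH]; first by rewrite !big_nil pw0.
move=> /= /andP[xs us] a0 ex.
have ex' : forall i j, i \in s -> j \in s -> a i != 0 -> a j != 0 -> i = j.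
  by move=> i j si sj; apply: ex; rewrite inE ?si ?sj orbT.
rewrite !big_cons; have [ax|ax] := eqVneq (a x) 0.
  by rewrite ax add0r pw0 add0r; exact: IH.
have -> : \sum_(i <- s) a i = 0.
  rewrite big_seq big1 // => i si; apply/eqP; apply: contraT => ai.
  have xi := ex x i (mem_head _ _) (mem_behead (s:=x::s) si) ax ai.
  by move: xs; rewrite xi si.
rewrite addr0 lerDl; apply: sumr_ge0 => i _; exact: powR_ge0.
Qed.

Lemma pw_add2 (u v : R) : 0 <= u -> 0 <= v ->
  (u + v) `^ p <= 2%:R `^ p * (u `^ p + v `^ p).
Proof.
move=> u0 v0.
have := @pow_sum_le bool [:: true; false] (fun b => if b then u else v).
rewrite !big_cons !big_nil !addr0 /=; apply; by case.
Qed.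

End PowFacts.
Lemma fsT (T : choiceType) (V : zmodType) (r : seq T) (F : T -> V) :
  uniq r -> (forall t, t \notin r -> F t = 0) ->
  \sum_(t \in [set: T]) F t = \sum_(t <- r) F t.
Proof.
move=> ur F0; rewrite (fsbig_seq _ _ ur) (fsbig_widen [set` r] setT) //.
move=> t [_ /= tr]; apply: F0; apply/negP => h; exact: tr.
Qed.

Section EsumBridge.
Variables (R : realType) (T : choiceType).

Lemma esum_le_of (D : set T) (phi : T -> R) (M : R) :
  (forall t, 0 <= phi t) ->
  (forall s : seq T, uniq s -> (forall t, t \in s -> D t) -> \sum_(t <- s) phi t <= M) ->
  (\esum_(t in D) (phi t)%:E <= M%:E)%E.
Proof.
move=> phi0 H; apply: ge_ereal_sup => _ [A [finA AD] <-].
rewrite (fsbig_fwiden (finmap.enum_fset (fset_set A)) A) //.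
- rewrite sumEFin lee_fin; apply: H; first exact: finmap.fset_uniq.
  by move=> t; rewrite in_fset_set // inE => /AD.
- by move=> t At; rewrite /= in_fset_set // inE.
- move=> t [/= tA nA]; exfalso; apply: nA; move: tA; rewrite in_fset_set // inE.
  by [].
Qed.

Lemma esum_ge_seq (D : set T) (phi : T -> R) (s : seq T) :
  (forall t, 0 <= phi t) -> uniq s -> (forall t, t \in s -> D t) ->
  ((\sum_(t <- s) phi t)%:E <= \esum_(t in D) (phi t)%:E)%E.
Proof.
move=> phi0 us sD; apply: esum_ge; exists [set` s].
  split; first exact: finite_seq.
  by move=> t /= ts; apply: sD.
by rewrite -(fsbig_seq _ _ us) sumEFin.
Qed.
End EsumBridge.

Section LP.
Variables (R : realType) (k : scalar_kind) (G : choiceType) (L : groupLaw G) (p : R).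
Hypothesis p1 : 1 < p.
Local Notation K := (scal R k).

Let p0 : 0 < p. Proof. exact: lt_trans p1. Qed.

Definition lpb (h : G -> K) := exists M : R, forall s : seq G, uniq s ->
  \sum_(t <- s) sabs (h t) `^ p <= M.

Lemma lpb_ext (a b : G -> K) : (forall t, a t = b t) -> lpb a -> lpb b.
Proof.
move=> ab [M HM]; exists M => s us.
by under eq_bigr do rewrite -ab; apply: HM.
Qed.

Lemma lpb0 : lpb (fun _ => 0).
Proof.
exists 0 => s _; rewrite big1 // => t _; rewrite sabs0; exact: pw0.
Qed.

Lemma lpbD (a b : G -> K) : lpb a -> lpb b -> lpb (fun t => a t + b t).
Proof.
move=> [Ma HMa] [Mb HMb]; exists (2%:R `^ p * (Ma + Mb)) => s us.
apply: (@le_trans _ _ (\sum_(t <- s) 2%:R `^ p * (sabs (a t) `^ p + sabs (b t) `^ p))).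
  apply: ler_sum => t _.
  apply: le_trans _ (pw_add2 p1 (sabs_ge0 _) (sabs_ge0 _)).
  apply: pw_le => //; [exact: sabs_ge0 | exact: sabsD].
rewrite -mulr_sumr big_split /=; apply: ler_wpM2l; first exact: powR_ge0.
by apply: lerD; [apply: HMa | apply: HMb].
Qed.

Lemma lpbZ (c : K) (a : G -> K) : lpb a -> lpb (fun t => c * a t).
Proof.
move=> [Ma HMa]; exists (sabs c `^ p * Ma) => s us.
under eq_bigr do rewrite sabsM powRM ?sabs_ge0 //.
rewrite -mulr_sumr; apply: ler_wpM2l; first exact: powR_ge0.
exact: HMa.
Qed.

Lemma lpb_sum (I : eqType) (r : seq I) (c : I -> K) (h : I -> G -> K) :
  (forall i, i \in r -> lpb (h i)) ->
  lpb (fun t => \sum_(i <- r) c i * h i t).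
Proof.
elim: r => [|i r IH] H.
  by apply: lpb_ext lpb0 => t; rewrite big_nil.
have h1 := lpbZ (c i) (H i (mem_head _ _)).
have h2 : lpb (fun t => \sum_(j <- r) c j * h j t).
  by apply: IH => j jr; apply: H; rewrite inE jr orbT.
apply: lpb_ext (lpbD h1 h2).
by move=> t /=; rewrite big_cons.
Qed.

Lemma lpb_transl (x : G) (h : G -> K) : lpb h -> lpb (fun t => h (gmul L x t)).
Proof.
move=> [M HM]; exists M => s us.
rewrite -(big_map (gmul L x) predT (fun u => sabs (h u) `^ p)).
apply: HM; rewrite map_inj_uniq //; exact: gmul_inj.
Qed.

Lemma lpb_in_lp (h : G -> K) : lpb h -> in_lp p h.
Proof.
move=> [M HM]; rewrite /in_lp /lp_sum.
have := @esum_le_of R G setT (fun t => sabs (h t) `^ p) M (fun t => powR_ge0 _ _) (fun s us _ => HM s us).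
move=> /le_lt_trans; apply; exact: ltry.
Qed.

Lemma lp_norm_bound (h : G -> K) (C : R) : (lp_norm p h < C%:E)%E ->
  forall s : seq G, uniq s -> \sum_(t <- s) sabs (h t) `^ p <= C `^ p.
Proof.
rewrite /lp_norm => hC s us.
have le1 := @esum_ge_seq R G setT (fun t => sabs (h t) `^ p) s (fun t => powR_ge0 _ _) us (fun _ _ => I).
have x0 : (0 <= lp_sum p h)%E by apply: esum_ge0 => t _; rewrite lee_fin powR_ge0.
move: hC le1 x0; rewrite /lp_sum.
case: (\esum_(x in [set: G]) (sabs (h x) `^ p)%:E)%E => [r| |] //.
- rewrite poweR_EFin !lee_fin lte_fin => hr le1 r0.
  apply: (le_trans le1).
  have -> : r = (r `^ p^-1) `^ p by rewrite -powRrM mulVf ?gt_eqF // powRr1.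
  apply: pw_le => //; [exact: powR_ge0 | exact: ltW].
- by rewrite poweRyr ?invr_eq0 ?gt_eqF.
Qed.
End LP.

Section Grad.
Variables (R : realType) (k : scalar_kind) (G : choiceType) (L : groupLaw G) (S : seq G) (p : R).
Hypothesis p1 : 1 < p.
Local Notation K := (scal R k).
Variable f : G -> K.
Hypothesis fD : in_Dp p L S f.

Lemma grad_lpb s0 : s0 \in S -> lpb p (fun t => f (gmul L (ginv L s0) t) - f t).
Proof.
move=> s0S.
have x0 : (0 <= grad_sum p L S f)%E by apply: esum_ge0 => e _; rewrite lee_fin powR_ge0.
have xfin : grad_sum p L S f = (fine (grad_sum p L S f))%:E.
  by rewrite fineK // ge0_fin_numE.
exists (fine (grad_sum p L S f)) => s us.
rewrite -lee_fin -xfin.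
rewrite -(big_map (fun t => (t, gmul L (ginv L s0) t)) predT
           (fun e => sabs (f e.2 - f e.1) `^ p)).
apply: esum_ge_seq.
- move=> e; exact: powR_ge0.
- by rewrite map_inj_uniq // => a b [].
- by move=> e /mapP [t _ ->]; exists s0.
Qed.

Lemma word_lpb (w : seq G) : all (fun s => s \in S) w ->
  lpb p (fun t => f t - f (gmul L (ginv L (foldr (gmul L) (gone L) w)) t)).
Proof.
elim: w => [|s0 w IH] /=.
  move=> _; apply: (lpb_ext _ (lpb0 k G p1)) => t.
  by rewrite ginv1 gmul1 subrr.
move=> /andP[s0S wS].
have h1 := lpbZ (-1) (grad_lpb s0S).
have h2 := lpb_transl L (ginv L s0) (IH wS).
apply: (lpb_ext _ (lpbD p1 h1 h2)) => t /=.
rewrite ginvM -gmulA. ring.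
Qed.

Lemma elem_lpb : generates L S -> forall g, lpb p (fun t => f t - f (gmul L (ginv L g) t)).
Proof.
move=> gen g; have [w [wS ->]] := gen g; exact: word_lpb.
Qed.
End Grad.

Lemma sum_const_seq (V : nmodType) (T : Type) (s : seq T) (c : V) :
  \sum_(t <- s) c = c *+ size s.
Proof. elim: s => [|x s IH]; by rewrite ?big_nil ?big_cons ?IH ?mulrS. Qed.

Section AL.
Variables (R : realType) (p : R).
Hypothesis p1 : 1 < p.
Variables (T : eqType) (w : nat -> T -> R) (M : R).
Hypothesis w0 : forall n t, 0 <= w n t.
Hypothesis wM : forall n (s : seq T), uniq s -> \sum_(t <- s) w n t `^ p <= M.

Let p0 : 0 < p. Proof. exact: lt_trans p1. Qed.

Lemma est (A : nat -> seq T) (nk : nat -> nat) (d : R) (N : nat) :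
  0 <= d ->
  (forall j l t, (j <= l)%N -> t \in A j -> t \in A l) ->
  (forall j t, t \in A j -> w (nk j) t `^ p <= d / (size (A j)).+1%:R) ->
  (forall j Y, uniq Y -> (forall t, t \in Y -> t \notin A j.+1) ->
      \sum_(t <- Y) w (nk j) t `^ p <= d) ->
  forall Y, uniq Y ->
  \sum_(t <- Y) (\sum_(j <- iota 0 N) w (nk j) t) `^ p <=
    2%:R `^ p * (N%:R * M + N%:R `^ p * (N%:R * (d + d))).
Proof.
move=> d0 Amono Hsmall Htail Y uY.
pose dom j t := (t \in A j.+1) && (t \notin A j).
have excl : forall t i j, dom i t -> dom j t -> i = j.
  move=> t i j /andP[ti1 ti] /andP[tj1 tj]; apply/eqP; apply: contraT => ij.
  case: (ltngtP i j) ij => // [ltij|ltji] _.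
    by move: tj; rewrite (Amono i.+1 j t ltij ti1).
  by move: ti; rewrite (Amono j.+1 i t ltji tj1).
pose Dv t := \sum_(j <- iota 0 N) (if dom j t then w (nk j) t else 0).
pose Ev t := \sum_(j <- iota 0 N) (if dom j t then 0 else w (nk j) t).
have WDE t : \sum_(j <- iota 0 N) w (nk j) t = Dv t + Ev t.
  rewrite /Dv /Ev -big_split /=; apply: eq_bigr => j _.
  by case: (dom j t); rewrite ?addr0 ?add0r.
have Dp t : Dv t `^ p <= \sum_(j <- iota 0 N) (if dom j t then w (nk j) t `^ p else 0).
  apply: (le_trans (pow_sum_excl p1 (iota_uniq 0 N) _ _)).
  - by move=> j; case: ifP.
  - move=> i j _ _; case: ifP => [di|]; last by rewrite eqxx.
    case: ifP => [dj|]; last by rewrite eqxx.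
    by move=> _ _; exact: excl di dj.
  apply: ler_sum => j _; case: ifP => _ //; by rewrite pw0.
have Ep t : Ev t `^ p <= N%:R `^ p * \sum_(j <- iota 0 N) (if dom j t then 0 else w (nk j) t `^ p).
  have := pow_sum_le p1 (iota 0 N) (a := fun j => if dom j t then 0 else w (nk j) t).
  rewrite size_iota => /(_ _) H; apply: (le_trans (H _)).
    by move=> j; case: ifP.
  apply: ler_wpM2l; first exact: powR_ge0.
  apply: ler_sum => j _; case: ifP => _ //; by rewrite pw0.
have Dv0 t : 0 <= Dv t by apply: sumr_ge0 => j _; case: ifP.
have Ev0 t : 0 <= Ev t by apply: sumr_ge0 => j _; case: ifP.
have Wp t : (\sum_(j <- iota 0 N) w (nk j) t) `^ p <=
   2%:R `^ p * (\sum_(j <- iota 0 N) (if dom j t then w (nk j) t `^ p else 0) +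
     N%:R `^ p * \sum_(j <- iota 0 N) (if dom j t then 0 else w (nk j) t `^ p)).
  rewrite WDE; apply: (le_trans (pw_add2 p1 (Dv0 t) (Ev0 t))).
  apply: ler_wpM2l; first exact: powR_ge0.
  exact: lerD.
apply: (le_trans (ler_sum _ (fun t _ => Wp t))).
rewrite -mulr_sumr; apply: ler_wpM2l; first exact: powR_ge0.
rewrite big_split /= -mulr_sumr; apply: lerD.
  rewrite exchange_big /=.
  apply: (@le_trans _ _ (\sum_(j <- iota 0 N) M)); last by rewrite sum_const_seq size_iota mulr_natl.
  apply: ler_sum => j _; apply: le_trans (wM (nk j) uY).
  apply: ler_sum => t _; case: ifP => _ //; exact: powR_ge0.
apply: ler_wpM2l; first exact: powR_ge0.
rewrite exchange_big /=.
apply: (@le_trans _ _ (\sum_(j <- iota 0 N) (d + d))); last by rewrite sum_const_seq size_iota mulr_natl.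
apply: ler_sum => j _.
apply: (@le_trans _ _ (\sum_(t <- Y) ((if t \in A j then w (nk j) t `^ p else 0) +
                                  (if t \in A j.+1 then 0 else w (nk j) t `^ p)))).
  apply: ler_sum => t _; rewrite /dom.
  case: (t \in A j.+1); case: (t \in A j) => /=; rewrite ?addr0 ?add0r //.
  by rewrite lerDl powR_ge0.
rewrite big_split /=; apply: lerD.
  rewrite -big_mkcond /= -big_filter.
  apply: (@le_trans _ _ (\sum_(t <- [seq t <- Y | t \in A j]) (d / (size (A j)).+1%:R))).
    rewrite big_seq [X in _ <= X]big_seq; apply: ler_sum => t; rewrite mem_filter => /andP[tA _]; exact: Hsmall.
  rewrite sum_const_seq -[_ *+ _]mulr_natr.
  have hs : (size [seq t <- Y | t \in A j] <= size (A j))%N.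
    apply: uniq_leq_size; first exact: filter_uniq.
    by move=> t; rewrite mem_filter => /andP[].
  rewrite -mulrA -[X in _ <= X]mulr1; apply: ler_wpM2l => //.
  rewrite mulrC ler_pdivrMr ?ltr0Sn // mul1r ler_nat; exact: leqW.
rewrite (eq_bigr (fun t => if t \notin A j.+1 then w (nk j) t `^ p else 0)); last first.
  by move=> t _; case: (t \in A j.+1).
rewrite -big_mkcond /= -big_filter.
  apply: Htail; first exact: filter_uniq.
  by move=> t; rewrite mem_filter => /andP[].
Qed.
End AL.

Section AL2.
Variables (R : realType) (p : R).
Hypothesis p1 : 1 < p.
Variables (T : eqType) (w : nat -> T -> R) (M : R).
Hypothesis w0 : forall n t, 0 <= w n t.
Hypothesis wM : forall n (s : seq T), uniq s -> \sum_(t <- s) w n t `^ p <= M.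
Hypothesis wc : forall t, (fun n => w n t) @ \oo --> (0 : R).

Let p0 : 0 < p. Proof. exact: lt_trans p1. Qed.

Lemma tail_ex n d : 0 < d -> exists B : seq T, forall Y, uniq Y ->
  (forall t, t \in Y -> t \notin B) -> \sum_(t <- Y) w n t `^ p <= d.
Proof.
move=> d0.
pose E := [set x : R | exists s : seq T, uniq s /\ x = \sum_(t <- s) w n t `^ p].
have hE : has_sup E.
  split; first by exists 0, [::]; rewrite big_nil.
  by exists M => x [s [us ->]]; apply: wM.
have [x [B [uB ->]] hx] := sup_adherent d0 hE.
exists B => Y uY YB.
have uYB : uniq (Y ++ B).
  rewrite cat_uniq uY uB andbT /=; apply/hasPn => t tB; apply/negP => tY.
  by move: (YB t tY); rewrite tB.
have : \sum_(t <- Y ++ B) w n t `^ p <= sup E.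
  by apply: sup_upper_bound => //; exists (Y ++ B).
rewrite big_cat /= => h; move: hx; lra.
Qed.

Lemma small_ex (X : seq T) th : 0 < th -> exists n, forall t, t \in X -> w n t `^ p <= th.
Proof.
move=> th0; pose eta := th `^ p^-1.
have eta0 : 0 < eta by apply: powR_gt0.
have : exists N0, forall n, (N0 <= n)%N -> forall t, t \in X -> w n t < eta.
  elim: X => [|x X [N1 H1]]; first by exists 0%N.
  have [N2 _ H2] := (cvgrPdist_lt _ _).1 (wc x) eta eta0.
  exists (maxn N1 N2) => n; rewrite geq_max => /andP[n1 n2] t; rewrite inE => /orP[/eqP ->|tX].
    have := H2 n n2; rewrite /= sub0r normrN => /(le_lt_trans (ler_norm _)); done.
  exact: H1.
move=> [N0 H]; exists N0 => t tX.
have -> : th = eta `^ p by rewrite /eta -powRrM mulVf ?gt_eqF // powRr1 // ltW.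
apply: pw_le => //; apply: ltW; exact: H.
Qed.

Lemma AL eps : 0 < eps -> exists N : nat, (0 < N)%N /\ exists nk : nat -> nat,
  forall Y, uniq Y ->
  \sum_(t <- Y) ((N%:R)^-1 * \sum_(j <- iota 0 N) w (nk j) t) `^ p <= eps.
Proof.
move=> e0.
have M0 : 0 <= M by have := wM 0 (s:=[::]) isT; rewrite big_nil.
pose c2 : R := 2%:R `^ p.
have c20 : 0 < c2 by apply: powR_gt0.
pose q := p - 1.
have q0 : 0 < q by rewrite subr_gt0.
pose C0 := 2 * c2 * M / eps.
have C00 : 0 <= C0 by rewrite /C0 divr_ge0 // ?mulr_ge0 // ltW.
pose N := (Num.Def.archi_bound (C0 `^ q^-1)).+1.
have NC : C0 `^ q^-1 <= N%:R.
  rewrite /N -addn1 natrD; apply: ler_wpDr => //; apply: ltW; apply: archi_boundP; exact: powR_ge0.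
have Nq : C0 <= N%:R `^ q.
  have -> : C0 = (C0 `^ q^-1) `^ q by rewrite -powRrM mulVf ?gt_eqF // powRr1.
  apply: (ge0_ler_powR (ltW q0)); rewrite ?nnegrE //; exact: powR_ge0.
have N0 : (0 < N)%N by [].
have N0r : 0 < N%:R :> R by rewrite ltr0n.
pose d := eps / (4 * c2 * N%:R).
have d0 : 0 < d by rewrite /d divr_gt0 // !mulr_gt0.
have step : forall X : seq T, exists nb : nat * seq T,
    (forall t, t \in X -> w nb.1 t `^ p <= d / (size X).+1%:R) /\
    (forall Y, uniq Y -> (forall t, t \in Y -> t \notin nb.2) -> \sum_(t <- Y) w nb.1 t `^ p <= d).
  move=> X.
  have [n Hn] := small_ex X (divr_gt0 d0 (ltr0Sn R (size X))).
  have [B HB] := tail_ex n d0.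
  by exists (n, B).
have [F HF] := choice step.
pose A j := iter j (fun X => X ++ (F X).2) [::].
pose nk j := (F (A j)).1.
have Amono : forall j l t, (j <= l)%N -> t \in A j -> t \in A l.
  move=> j l t; elim: l => [|l IH]; first by rewrite leqn0 => /eqP ->.
  rewrite leq_eqVlt => /orP[/eqP -> //|jl] tj.
  by rewrite /A iterS mem_cat -/(A l) (IH jl tj).
have Hsmall : forall j t, t \in A j -> w (nk j) t `^ p <= d / (size (A j)).+1%:R.
  by move=> j t tA; apply: (HF (A j)).1.
have Htail : forall j Y, uniq Y -> (forall t, t \in Y -> t \notin A j.+1) ->
      \sum_(t <- Y) w (nk j) t `^ p <= d.
  move=> j Y uY HY; apply: (HF (A j)).2 => // t tY.
  by have := HY t tY; rewrite /A iterS mem_cat negb_or => /andP[].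
exists N; split => //; exists nk => Y uY.
have hE := est p1 w0 wM N (ltW d0) Amono Hsmall Htail uY.
pose b := (N%:R^-1) `^ p.
have b0 : 0 <= b by apply: powR_ge0.
have hb : b * N%:R `^ p = 1 by rewrite -powRM ?invr_ge0 ?ltW // mulVf ?gt_eqF // powR1.
have hpq : N%:R `^ p = N%:R * N%:R `^ q by rewrite mulr_powRB1 // ltW.
rewrite (eq_bigr (fun t => b * (\sum_(j <- iota 0 N) w (nk j) t) `^ p)); last first.
  move=> t _; rewrite powRM ?invr_ge0 ?(ltW N0r) //.
  by apply: sumr_ge0 => j _; apply: w0.
rewrite -mulr_sumr; apply: (le_trans (ler_wpM2l b0 hE)).
move: hb; rewrite hpq => hb.
have hC : 2 * c2 * M <= eps * N%:R `^ q.
  move: Nq; rewrite /C0 ler_pdivrMr // => h; by rewrite [eps * _]mulrC.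
have hd : d * (4 * c2 * N%:R) = eps by rewrite /d mulfVK // gt_eqF // !mulr_gt0.
set Nq' := N%:R `^ q in hb hC hd *.
set Nr := N%:R in hb hC hd N0r *.
have key : b * Nr * (2 * c2 * M) <= b * Nr * (eps * Nq').
  by apply: ler_wpM2l => //; apply: mulr_ge0 => //; apply: ltW.
have e2 : b * Nr * (eps * Nq') = eps * (b * (Nr * Nq')) by ring.
rewrite e2 hb mulr1 in key.
have e1 : b * (c2 * (Nr * M + Nr * Nq' * (Nr * (d + d)))) =
   (b * Nr * (2 * c2 * M)) / 2 + (d * (4 * c2 * Nr)) / 2 * (b * (Nr * Nq')).
  by field.
rewrite e1 hb hd; lra.
Qed.
End AL2.

Section Conv.
Variables (R : realType) (k : scalar_kind) (G : choiceType) (L : groupLaw G).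
Local Notation K := (scal R k).
Local Notation m := (gmul L).
Local Notation i := (ginv L).
Local Notation e := (gone L).

Lemma supp_seq (xi : G -> K) : fin_supp xi ->
  exists r : seq G, uniq r /\ forall g, g \notin r -> xi g = 0.
Proof.
move=> fs; exists (finmap.enum_fset (fset_set [set x | xi x != 0])); split.
  exact: finmap.fset_uniq.
move=> g; rewrite in_fset_set // notin_setE /= => h.
by apply/eqP; apply: contrapT => h'; apply: h; apply/negP.
Qed.

Lemma conv_seq (xi f : G -> K) (r : seq G) : uniq r -> (forall g, g \notin r -> xi g = 0) ->
  forall eta, gconv L xi f eta = \sum_(g <- r) xi g * f (m (i g) eta).
Proof.
move=> ur h eta; rewrite /gconv (fsT ur) // => g gr; by rewrite h // mul0r.
Qed.

Lemma mass_seq (xi : G -> K) (r : seq G) : uniq r -> (forall g, g \notin r -> xi g = 0) ->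
  total_mass xi = \sum_(g <- r) xi g.
Proof. by move=> ur h; rewrite /total_mass (fsT ur). Qed.

Lemma inner_conv (s : G) (xi : G -> K) gam :
  gconv L (fun x => delta s x - delta e x) xi gam = xi (m (i s) gam) - xi gam.
Proof.
rewrite /gconv (fsT (undup_uniq [:: s; e])); last first.
  move=> x; rewrite mem_undup !inE negb_or => /andP[xs xe].
  by rewrite /delta (negbTE xs) (negbTE xe) subrr mul0r.
have [->|se] := eqVneq s e.
  by rewrite /= inE eqxx /= big_seq1 subrr mul0r ginv1 (gmul1 L) subrr.
rewrite /= mem_seq1 (negbTE se) big_cons big_seq1 /delta eqxx (negbTE se) eq_sym (negbTE se) eqxx.
by rewrite ginv1 (gmul1 L) !subr0 sub0r mul1r mulN1r.
Qed.

Lemma outer_conv (s : G) (xi f : G -> K) eta : fin_supp xi ->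
  gconv L (gconv L (fun x => delta s x - delta e x) xi) f eta =
  gconv L xi f (m (i s) eta) - gconv L xi f eta.
Proof.
move=> fs; have [r [ur hr]] := supp_seq fs.
pose z := undup (map (m s) r ++ r).
have uz : uniq z := undup_uniq _.
rewrite (conv_seq _ uz); last first.
  move=> g; rewrite mem_undup mem_cat negb_or => /andP[g1 g2].
  rewrite inner_conv (hr g g2) subr0; apply: hr; apply: contra g1 => h.
  by apply/mapP; exists (m (i s) g) => //; rewrite gmulKr.
under eq_bigr do rewrite inner_conv mulrBl.
rewrite sumrB [gconv L xi f eta](conv_seq _ uz); last first.
  by move=> g; rewrite mem_undup mem_cat negb_or => /andP[_]; exact: hr.
congr (_ - _).
pose z' := map (m (i s)) z.
have uz' : uniq z' by rewrite map_inj_uniq //; exact: gmul_inj.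
rewrite (conv_seq _ uz'); last first.
  move=> g gz; apply: hr; apply: contra gz => gr.
  apply/mapP; exists (m s g); last by rewrite gmulKl.
  by rewrite mem_undup mem_cat; apply/orP; left; apply/mapP; exists g.
rewrite big_map; apply: eq_bigr => g _.
by rewrite ginvM -gmulA ginvK gmulKr.
Qed.
End Conv.

Lemma cvg_sum_seq (R : realType) (I : eqType) (l : seq I) (F : nat -> I -> R) :
  (forall s, s \in l -> (fun n => F n s) @ \oo --> (0 : R)) ->
  (fun n => \sum_(s <- l) F n s) @ \oo --> (0 : R).
Proof.
elim: l => [|x l IH] H.
  under eq_fun do rewrite big_nil; exact: cvg_cst.
under eq_fun do rewrite big_cons.
have h2 : (fun n => \sum_(s <- l) F n s) @ \oo --> (0:R).
  by apply: IH => s sl; apply: H; rewrite inE sl orbT.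
have h := cvgD (H x (mem_head _ _)) h2; rewrite addr0 in h; exact: h.
Qed.

Lemma le_sum_mem (R : realType) (I : eqType) (l : seq I) (F : I -> R) x :
  (forall y, 0 <= F y) -> x \in l -> F x <= \sum_(y <- l) F y.
Proof.
move=> F0; elim: l => [|y l IH] //; rewrite inE big_cons => /orP[/eqP ->|xl].
  by rewrite lerDl; apply: sumr_ge0.
by apply: (le_trans (IH xl)); rewrite lerDr.
Qed.

Theorem lemma3p1 (R : realType) (k : scalar_kind) (G : choiceType) (L : groupLaw G)
  (S : seq G) (p : R) (f : G -> scal R k) (xi : nat -> G -> scal R k) :
  symmetric_set L S -> generates L S -> 1 < p ->
  in_Dp p L S f ->
  (forall n, fin_supp (xi n)) ->
  (forall n, total_mass (xi n) = 1) ->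
  (forall s, s \in S -> forall eta : G,
     (fun n => sabs (gconv L (gconv L (fun x => (delta s x - delta (gone L) x)%R) (xi n)) f eta))
       @ \oo --> (0 : R)) ->
  (exists2 K : R, 0 < K & forall s, s \in S -> forall n,
     (lp_norm p (gconv L (gconv L (fun x => (delta s x - delta (gone L) x)%R) (xi n)) f)
       < K%:E)%E) ->
  reduced_class_zero p L S f.
Proof.
move=> _ gen p1 fD fs tm cv [Kc Kc0 HK] eps eps0.
have p0 : 0 < p by exact: lt_trans p1.
pose a n s eta := gconv L (gconv L (fun x => (delta s x - delta (gone L) x)%R) (xi n)) f eta.
pose u n eta := gconv L (xi n) f eta.
have Hid : forall n s eta, a n s eta = u n (gmul L (ginv L s) eta) - u n eta.
  by move=> n s eta; rewrite /a outer_conv.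
pose w n (e : G * G) := \sum_(s <- S)
   (if gmul L (ginv L s) e.1 == e.2 then sabs (a n s e.1) else 0).
have w0 : forall n e, 0 <= w n e.
  by move=> n e; apply: sumr_ge0 => s _; case: ifP => _ //; exact: sabs_ge0.
have wc : forall e, (fun n => w n e) @ \oo --> (0 : R).
  move=> e; apply: cvg_sum_seq => s sS; case: (gmul L (ginv L s) e.1 == e.2).
    exact: cv.
  exact: cvg_cst.
pose M := (size S)%:R `^ p * ((size S)%:R * Kc `^ p).
have wM : forall n (Y : seq (G * G)), uniq Y -> \sum_(e <- Y) w n e `^ p <= M.
  move=> n Y uY.
  apply: (@le_trans _ _ (\sum_(e <- Y) (size S)%:R `^ p * \sum_(s <- S)
      (if gmul L (ginv L s) e.1 == e.2 then sabs (a n s e.1) `^ p else 0))).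
    apply: ler_sum => e _; apply: (le_trans (pow_sum_le p1 _ _)).
      by move=> s; case: ifP => _ //; exact: sabs_ge0.
    apply: ler_wpM2l; first exact: powR_ge0.
    by apply: ler_sum => s _; case: ifP => _ //; rewrite pw0.
  rewrite -mulr_sumr exchange_big /=; apply: ler_wpM2l; first exact: powR_ge0.
  rewrite -[X in _ <= X * _]sum_const_seq mulr_suml.
  under [X in _ <= X]eq_bigr do rewrite mul1r.
  rewrite big_seq [X in _ <= X]big_seq; apply: ler_sum => s sS.
  rewrite -big_mkcond /= -big_filter.
  rewrite -(big_map fst predT (fun x => sabs (a n s x) `^ p)).
  apply: (lp_norm_bound p1 (HK s sS n)).
  rewrite map_inj_in_uniq ?filter_uniq //.
  move=> [x1 y1] [x2 y2]; rewrite !mem_filter /= => /andP[/eqP h1 _] /andP[/eqP h2 _] e12.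
  by rewrite -h1 -h2 e12.
have [N [N0 [nk HN]]] := AL p1 w0 wM wc (divr_gt0 eps0 (ltr0Sn R 1)).
pose c : scal R k := (N%:R)^-1.
pose F eta := c * \sum_(j <- iota 0 N) u (nk j) eta.
exists (fun eta => f eta - F eta), (F (gone L)); split.
  apply: lpb_in_lp.
  have hcs : \sum_(j <- iota 0 N) c = 1.
    by rewrite sum_const_seq size_iota /c -[N%:R^-1 *+ N]mulr_natr mulVf // pnatr_eq0 -lt0n.
  apply: (lpb_ext _ (@lpb_sum R k G p p1 nat (iota 0 N) (fun _ => c)
            (fun j eta => f eta - u (nk j) eta) _)).
    move=> eta /=; rewrite /F mulr_sumr.
    under eq_bigr do rewrite mulrBr.
    rewrite sumrB; congr (_ - _).
    by rewrite -mulr_suml hcs mul1r.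
  move=> j _.
  have [r [ur hr]] := supp_seq (fs (nk j)).
  apply: (lpb_ext _ (@lpb_sum R k G p p1 G r (xi (nk j))
            (fun g eta => f eta - f (gmul L (ginv L g) eta)) _)).
    move=> eta; rewrite /u (conv_seq L _ ur hr) /=.
    under eq_bigr do rewrite mulrBr.
    rewrite sumrB; congr (_ - _).
    by rewrite -(mulr_suml r xpredT (xi (nk j)) (f eta)) -(mass_seq ur hr) tm mul1r.
  by move=> g _; exact: (elem_lpb p1 fD gen).
rewrite /Dp_normp.
have -> : sabs (f (gone L) - (f (gone L) - F (gone L)) - F (gone L)) = 0.
  have -> : f (gone L) - (f (gone L) - F (gone L)) - F (gone L) = 0 by ring.
  exact: sabs0.
rewrite pw0 // adde0.
apply: (@le_lt_trans _ _ (eps / 2)%:E); last first.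
  by rewrite lte_fin ltr_pdivrMr // ltr_pMr // ltr1n.
apply: esum_le_of; first by move=> e; exact: powR_ge0.
move=> Y uY YE.
apply: (le_trans _ (HN Y uY)); rewrite big_seq [X in _ <= X]big_seq; apply: ler_sum => e eY.
have [s sS hs] := YE e eY.
have -> : f e.2 - (f e.2 - F e.2) - F (gone L) - (f e.1 - (f e.1 - F e.1) - F (gone L))
          = F e.2 - F e.1 by ring.
apply: (pw_le p1); first exact: sabs_ge0.
rewrite /F -mulrBr -sumrB sabsM sabsV sabs_nat; apply: ler_wpM2l.
  by rewrite invr_ge0.
apply: (le_trans (sabs_sum _ _)); apply: ler_sum => j _.
rewrite -hs -Hid /w.
have := le_sum_mem (F := fun s0 => if gmul L (ginv L s0) e.1 == e.2 then sabs (a (nk j) s0 e.1) else 0) _ sS.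
rewrite /= hs eqxx; apply.
by move=> s0; case: ifP => _ //; exact: sabs_ge0.
Qed.
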